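(* Let $(a,b)$ be an open interval with $0\in(a,b)$, let $n\ge 2$ be an integer and $C\ge 0$ a constant, and let $f\in C^\infty(a,b)$ (real or complex valued) satisfy $$|f^{(n)}(x)|\le C\sum_{k=0}^{n-1}\frac{|f^{(k)}(x)|}{|x|^{n-k}},\qquad x\in(a,b)\setminus\{0\}.$$ If $f\not\equiv 0$ on $(a,b)$, then $f$ has finite vanishing order $N$ at $0$, i.e. there is an integer $N\ge 0$ with $f^{(j)}(0)=0$ for all $0\le j<N$ and $f^{(N)}(0)\neq 0$ (so $f(x)=a_Nx^N+O(x^{N+1})$ near $0$ with $a_N\neq 0$), and moreover $$N\le B_nC+n-1,\qquad B_n=\sum_{k=0}^{n-1}\frac{1}{k!}.$$ *)

(* Defs.v *)
From Stdlib Require Export Reals Arith.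
Open Scope R_scope.

(* A function f is C^infty on (a,b) iff such a family with D 0 = f exists. *)
Definition derivs_on (a b : R) (D : nat -> R -> R) : Prop :=
  forall (k : nat) (x : R), a < x < b -> derivable_pt_lim (D k) x (D (S k) x).

(* modulus of the complex number u + i v *)
Definition cmod (u v : R) : R := sqrt (u * u + v * v).

Definition Bn (n : nat) : R := sum_f_R0 (fun k => / INR (fact k)) (n - 1).

(* Main.v *)
Require Import Defs.
From Stdlib Require Import Reals Lra Lia Classical ZArith.
Open Scope R_scope.

Lemma cmod_nonneg u v : 0 <= cmod u v.
Proof. unfold cmod; apply sqrt_pos. Qed.

Lemma cmod_sq u v : cmod u v * cmod u v = u*u + v*v.
Proof. unfold cmod; apply sqrt_sqrt; nra. Qed.

Lemma cs_le al be u v : al*al + be*be = 1 -> al*u + be*v <= cmod u v.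
Proof.
  intros H. destruct (Rle_or_lt (al*u+be*v) 0) as [h|h].
  - pose proof (cmod_nonneg u v); lra.
  - pose proof (cmod_nonneg u v). pose proof (cmod_sq u v).
    assert ((al*u+be*v)*(al*u+be*v) <= cmod u v * cmod u v).
    { rewrite H1. pose proof (Rle_0_sqr (al*v-be*u)). unfold Rsqr in *. nra. }
    nra.
Qed.

Lemma cmod_00 u v : cmod u v = 0 -> u = 0 /\ v = 0.
Proof. intros H. pose proof (cmod_sq u v). rewrite H in H0. nra. Qed.

Lemma L (a b : R) (u v u' v' : R -> R) (K : R) (i : nat) (x : R) :
  a < 0 -> 0 <= x < b ->
  (forall s, a < s < b -> derivable_pt_lim u s (u' s)) ->
  (forall s, a < s < b -> derivable_pt_lim v s (v' s)) ->
  u 0 = 0 -> v 0 = 0 ->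
  (forall s, 0 < s < x -> cmod (u' s) (v' s) <= K * s ^ i) ->
  cmod (u x) (v x) <= K * x ^ (S i) / INR (S i).
Proof.
  intros ha hx du dv u0 v0 hb.
  destruct (Req_dec x 0) as [->|hx0].
  { rewrite u0, v0. unfold cmod. replace (0*0+0*0) with 0 by ring. rewrite sqrt_0.
    simpl. replace (K * (0 * 0 ^ i) / INR (S i)) with 0 by (unfold Rdiv; ring). lra. }
  assert (hxp : 0 < x) by lra.
  assert (hK : 0 <= K).
  { pose proof (hb (x/2) ltac:(lra)). pose proof (cmod_nonneg (u' (x/2)) (v' (x/2))).
    assert (0 < (x/2)^i) by (apply pow_lt; lra).
    destruct (Rle_or_lt 0 K); [auto|]. nra. }
  assert (hS : 0 < INR (S i)) by (apply lt_0_INR; lia).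
  set (c := cmod (u x) (v x)).
  destruct (Req_dec c 0) as [hc|hc].
  { rewrite hc. apply Rmult_le_pos; [apply Rmult_le_pos; [lra| apply pow_le; lra]|].
    left; apply Rinv_0_lt_compat; lra. }
  assert (hcp : 0 < c) by (pose proof (cmod_nonneg (u x) (v x)); fold c in H; lra).
  set (al := u x / c). set (be := v x / c).
  assert (hab : al*al + be*be = 1).
  { unfold al, be. pose proof (cmod_sq (u x) (v x)). fold c in H.
    replace (u x / c * (u x / c) + v x / c * (v x / c)) with ((u x * u x + v x * v x)/(c*c)) by (field; lra). rewrite <- H. field. lra. }
  set (h := fun s => al * u s + be * v s - K * s ^ (S i) / INR (S i)).
  destruct (MVT_cor2 h (fun s => al * u' s + be * v' s - K * s ^ i) 0 x hxp) as [c0 [he hc0]].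
  { intros s hs. unfold h.
    assert (d1 : derivable_pt_lim (fun y => y ^ S i) s (INR (S i) * s ^ Init.Nat.pred (S i)))
      by apply derivable_pt_lim_pow.
    simpl Init.Nat.pred in d1.
    assert (ds : a < s < b) by lra.
    pose proof (du s ds). pose proof (dv s ds).
    apply (derivable_pt_lim_minus (fun s => al * u s + be * v s) (fun s => K * s ^ S i / INR (S i))).
    - apply (derivable_pt_lim_plus (fun s => al * u s) (fun s => be * v s)).
      + apply (derivable_pt_lim_scal u al s); auto.
      + apply (derivable_pt_lim_scal v be s); auto.
    - replace (K * s ^ i) with ((K / INR (S i)) * (INR (S i) * s ^ i)) by (field; lra).
      apply (derivable_pt_lim_ext (fun y => K / INR (S i) * y ^ S i)).
      { intros; field; lra. }
      apply (derivable_pt_lim_scal (fun y => y ^ S i) (K / INR (S i)) s); auto. }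
  unfold h in he.
  assert (hder : al * u' c0 + be * v' c0 - K * c0 ^ i <= 0).
  { pose proof (cs_le al be (u' c0) (v' c0) hab). pose proof (hb c0 hc0). lra. }
  rewrite u0, v0 in he.
  assert (al * u x + be * v x = c).
  { unfold al, be. pose proof (cmod_sq (u x) (v x)). fold c in H.
    replace (u x / c * u x + v x / c * v x) with ((u x * u x + v x * v x)/c) by (field; lra). rewrite <- H. field. lra. }
  simpl in he |- *.
  replace (K * (0 * 0 ^ i) / INR (S i)) with 0 in he by (unfold Rdiv; ring).
  nra.
Qed.

Notation cm U V k s := (cmod (U k s) (V k s)).

Lemma step2 a b U V N M x0 : a < 0 -> 0 < x0 < b -> derivs_on a b U -> derivs_on a b V ->
  (forall j, (j < N)%nat -> U j 0 = 0 /\ V j 0 = 0) -> 0 <= M ->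
  (forall s, 0 <= s <= x0 -> cm U V N s <= M) ->
  forall d, (d <= N)%nat -> forall s, 0 <= s <= x0 -> cm U V (N - d)%nat s <= M * s ^ d.
Proof.
  intros ha hx dU dV hv hM hB d. induction d as [|d IH]; intros hd s hs.
  - rewrite Nat.sub_0_r. simpl. rewrite Rmult_1_r. auto.
  - assert (E : S (N - S d) = (N - d)%nat) by lia.
    assert (hS : 1 <= INR (S d)) by (apply (le_INR 1); lia).
    assert (hsd : 0 <= s ^ S d) by (apply pow_le; lra).
    eapply Rle_trans.
    + apply (L a b (U (N - S d)%nat) (V (N - S d)%nat) (U (N - d)%nat) (V (N - d)%nat) M d s); auto; try lra.
      * intros t ht. rewrite <- E. apply dU; auto.
      * intros t ht. rewrite <- E. apply dV; auto.
      * apply hv; lia.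
      * apply hv; lia.
      * intros t ht. apply IH; [lia|lra].
    + unfold Rdiv. rewrite <- (Rmult_1_r (M * s ^ S d)) at 2.
      apply Rmult_le_compat_l; [apply Rmult_le_pos; auto|].
      rewrite <- Rinv_1. apply Rinv_le_contravar; lra.
Qed.

Definition cf (p j : nat) : R := INR (fact p) / INR (fact (p + j)).

Lemma step3 a b U V n p A x0 : a < 0 -> 0 < x0 < b -> derivs_on a b U -> derivs_on a b V ->
  (forall j, (j <= n - 1)%nat -> U j 0 = 0 /\ V j 0 = 0) ->
  (forall s, 0 <= s <= x0 -> cm U V (n-1)%nat s <= A * s ^ p) ->
  forall j, (j <= n - 1)%nat -> forall s, 0 <= s <= x0 ->
    cm U V (n - 1 - j)%nat s <= A * cf p j * s ^ (p + j).
Proof.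
  intros ha hx dU dV hv hA j. induction j as [|j IH]; intros hj s hs.
  - rewrite Nat.sub_0_r, Nat.add_0_r. unfold cf. rewrite Nat.add_0_r.
    replace (A * (INR (fact p) / INR (fact p))) with A; auto.
    field. apply not_0_INR. apply fact_neq_0.
  - assert (E : S (n - 1 - S j) = (n - 1 - j)%nat) by lia.
    eapply Rle_trans.
    + apply (L a b (U (n - 1 - S j)%nat) (V (n - 1 - S j)%nat) (U (n - 1 - j)%nat) (V (n - 1 - j)%nat) (A * cf p j) (p + j) s); auto; try lra.
      * intros t ht. rewrite <- E. apply dU; auto.
      * intros t ht. rewrite <- E. apply dV; auto.
      * apply hv; lia.
      * apply hv; lia.
      * intros t ht. apply IH; [lia|lra].
    + right. unfold cf. rewrite Nat.add_succ_r, fact_simpl, mult_INR.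
      assert (INR (fact (p + j)) <> 0) by (apply not_0_INR; apply fact_neq_0).
      assert (INR (S (p + j)) <> 0) by (apply not_0_INR; lia).
      field. split; auto.
Qed.

Lemma fact_mul_le p j : (fact p * fact j <= fact (p + j))%nat.
Proof.
  induction j as [|j IH].
  - simpl. rewrite Nat.add_0_r. lia.
  - rewrite Nat.add_succ_r, !fact_simpl. nia.
Qed.

Lemma cf_le p j : cf p j <= / INR (fact j).
Proof.
  unfold cf. pose proof (fact_mul_le p j).
  assert (h1 : 0 < INR (fact j)) by (apply lt_0_INR, lt_O_fact).
  assert (h2 : 0 < INR (fact (p+j))) by (apply lt_0_INR, lt_O_fact).
  apply le_INR in H. rewrite mult_INR in H.
  apply (Rmult_le_reg_r (INR (fact (p+j)) * INR (fact j))). nra.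
  field_simplify; lra.
Qed.

Lemma sum_rev (g : nat -> R) m : sum_f_R0 (fun k => g (m - k)%nat) m = sum_f_R0 g m.
Proof.
  revert g. induction m as [|m IH]; intros g.
  - reflexivity.
  - rewrite decomp_sum by lia. simpl Init.Nat.pred. rewrite Nat.sub_0_r.
    replace (sum_f_R0 (fun i => g (S m - S i)%nat) m) with (sum_f_R0 (fun i => g (m - i)%nat) m)
      by (apply sum_eq; intros; f_equal; lia).
    rewrite IH. simpl. ring.
Qed.

Lemma sum_cf p n : (1 <= n)%nat -> sum_f_R0 (fun k => cf p (n - 1 - k)) (n - 1) <= Bn n.
Proof.
  intros hn. rewrite (sum_rev (cf p)). unfold Bn. apply sum_Rle. intros; apply cf_le.
Qed.

Lemma step45 a b U V n C p A x0 : a < 0 -> 0 < x0 < b -> derivs_on a b U -> derivs_on a b V ->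
  (2 <= n)%nat -> (1 <= p)%nat -> 0 <= C -> 0 <= A ->
  (forall x, a < x < b -> x <> 0 ->
     cm U V n x <= C * sum_f_R0 (fun k => cm U V k x / Rabs x ^ (n - k)) (n - 1)) ->
  (forall j, (j <= n - 1)%nat -> U j 0 = 0 /\ V j 0 = 0) ->
  (forall s, 0 <= s <= x0 -> cm U V (n-1)%nat s <= A * s ^ p) ->
  forall s, 0 <= s <= x0 -> cm U V (n-1)%nat s <= (C * Bn n / INR p) * A * s ^ p.
Proof.
  intros ha hx dU dV hn hp hC hA hineq hv hH s hs.
  assert (E : S (n - 1) = n) by lia.
  assert (Ep : S (p - 1) = p) by lia.
  assert (hpI : 0 < INR p) by (apply lt_0_INR; lia).
  eapply Rle_trans.
  - apply (L a b (U (n - 1)%nat) (V (n - 1)%nat) (U n) (V n) (C * (A * Bn n)) (p - 1) s); auto; try lra.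
    + intros t ht. rewrite <- E at 2. apply dU; auto.
    + intros t ht. rewrite <- E at 2. apply dV; auto.
    + apply hv; lia.
    + apply hv; lia.
    + intros t ht. eapply Rle_trans; [apply hineq; lra|].
      rewrite Rmult_assoc. apply Rmult_le_compat_l; auto.
      assert (htp : 0 < t) by lra.
      rewrite Rabs_right by lra.
      apply Rle_trans with (sum_f_R0 (fun k => cf p (n - 1 - k) * (A * t ^ (p - 1))) (n - 1)).
      * apply sum_Rle. intros k hk.
        pose proof (step3 a b U V n p A x0 ha hx dU dV hv hH (n - 1 - k)%nat ltac:(lia) t ltac:(lra)) as h3.
        replace (n - 1 - (n - 1 - k))%nat with k in h3 by lia.
        replace (p + (n - 1 - k))%nat with ((p - 1) + (n - k))%nat in h3 by lia.
        rewrite pow_add in h3.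
        assert (0 < t ^ (n - k)) by (apply pow_lt; lra).
        apply (Rmult_le_reg_r (t ^ (n - k))); auto.
        unfold Rdiv. rewrite Rmult_assoc, Rinv_l by lra. nra.
      * rewrite <- scal_sum.
        assert (0 <= A * t ^ (p - 1)) by (apply Rmult_le_pos; auto; apply pow_le; lra).
        pose proof (sum_cf p n ltac:(lia)). nra.
  - rewrite Ep. right. field. lra.
Qed.

Lemma lim_le c K q : 0 <= c -> 0 <= K -> 0 <= q < 1 -> (forall m, c <= K * q ^ m) -> c <= 0.
Proof.
  intros hc hK hq H. destruct (Rle_or_lt c 0) as [h|h]; auto.
  destruct (pow_lt_1_zero q ltac:(rewrite Rabs_right; lra) (c / (K + 1)) ltac:(apply Rdiv_lt_0_compat; lra)) as [N HN].
  specialize (HN N (le_n N)). specialize (H N).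
  rewrite Rabs_right in HN by (apply Rle_ge, pow_le; lra).
  assert (K * q ^ N <= K * (c / (K+1))) by (apply Rmult_le_compat_l; lra).
  assert (K * (c / (K+1)) < c).
  { apply (Rmult_lt_reg_r (K+1)); [lra|]. field_simplify; lra. }
  lra.
Qed.

Lemma Bn_pos n : 0 <= Bn n.
Proof.
  unfold Bn. apply cond_pos_sum. intros. left. apply Rinv_0_lt_compat, lt_0_INR, lt_O_fact.
Qed.

Lemma cm_cont a b U V N c : derivs_on a b U -> derivs_on a b V -> a < c < b ->
  continuity_pt (fun s => cm U V N s) c.
Proof.
  intros dU dV hc.
  assert (cU : continuity_pt (U N) c) by (apply derivable_continuous_pt; exists (U (S N) c); apply dU; auto).
  assert (cV : continuity_pt (V N) c) by (apply derivable_continuous_pt; exists (V (S N) c); apply dV; auto).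
  unfold cmod.
  apply (continuity_pt_comp (fun s => U N s * U N s + V N s * V N s) sqrt).
  - apply (continuity_pt_plus (fun s => U N s * U N s) (fun s => V N s * V N s));
      apply continuity_pt_mult; auto.
  - apply continuity_pt_sqrt. nra.
Qed.

Lemma core a b U V n C N : a < 0 < b -> (2 <= n)%nat -> 0 <= C ->
  derivs_on a b U -> derivs_on a b V ->
  (forall x, a < x < b -> x <> 0 ->
     cm U V n x <= C * sum_f_R0 (fun k => cm U V k x / Rabs x ^ (n - k)) (n - 1)) ->
  Bn n * C + INR n - 1 < INR N ->
  (forall j, (j < N)%nat -> U j 0 = 0 /\ V j 0 = 0) ->
  forall x, 0 <= x < b -> U 0%nat x = 0 /\ V 0%nat x = 0.
Proof.
  intros [ha hb] hn hC dU dV hineq hN hv x hx.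
  pose proof (Bn_pos n) as hB.
  assert (hNn : (n <= N)%nat).
  { assert (INR (n - 1) < INR N) by (rewrite minus_INR by lia; simpl; nra).
    apply INR_lt in H. lia. }
  destruct (Req_dec x 0) as [->|hx0]. { apply hv; lia. }
  set (x0 := x). assert (hx0' : 0 < x0 < b) by (unfold x0; lra).
  set (p := (N - n + 1)%nat).
  assert (hp : (1 <= p)%nat) by (unfold p; lia).
  assert (hNp : (N - p = n - 1)%nat) by (unfold p; lia).
  destruct (continuity_ab_maj (fun s => cm U V N s) 0 x0 ltac:(lra)) as [Mx [HM hMx]].
  { intros c hc. apply (cm_cont a b); auto. lra. }
  set (M := cm U V N Mx).
  assert (hM : 0 <= M) by apply cmod_nonneg.
  assert (h0 : forall s, 0 <= s <= x0 -> cm U V (n-1)%nat s <= M * s ^ p).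
  { intros s hs. rewrite <- hNp. apply (step2 a b U V N M x0); auto; lia. }
  set (q := C * Bn n / INR p).
  assert (hpI : INR p = INR N - INR n + 1).
  { unfold p. rewrite plus_INR, minus_INR by lia. simpl. ring. }
  assert (hq : 0 <= q < 1).
  { unfold q. assert (0 < INR p) by (apply lt_0_INR; lia). split.
    - apply Rmult_le_pos; [nra| left; apply Rinv_0_lt_compat; lra].
    - apply (Rmult_lt_reg_r (INR p)); auto. field_simplify; nra. }
  assert (hit : forall m s, 0 <= s <= x0 -> cm U V (n-1)%nat s <= M * q ^ m * s ^ p).
  { intro m. induction m as [|m IH]; intros s hs.
    - simpl. rewrite Rmult_1_r. auto.
    - eapply Rle_trans.
      + apply (step45 a b U V n C p (M * q ^ m) x0); auto; try lra.
        * apply Rmult_le_pos; auto. apply pow_le; lra.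
        * intros; apply hv; lia.
      + right. fold q. simpl. ring. }
  assert (hz : forall s, 0 <= s <= x0 -> cm U V (n-1)%nat s <= 0 * s ^ p).
  { intros s hs. rewrite Rmult_0_l.
    apply (lim_le _ (M * s ^ p) q); auto. apply cmod_nonneg.
    apply Rmult_le_pos; auto; apply pow_le; lra.
    intro m. rewrite (hit m s hs). right; ring. }
  pose proof (step3 a b U V n p 0 x0 ha hx0' dU dV ltac:(intros; apply hv; lia) hz (n - 1)%nat (le_n _) x0 ltac:(lra)) as h3.
  rewrite Nat.sub_diag in h3. rewrite !Rmult_0_l in h3.
  apply cmod_00. pose proof (cmod_nonneg (U 0%nat x0) (V 0%nat x0)). lra.
Qed.

Definition refl (U : nat -> R -> R) : nat -> R -> R := fun k t => (-1) ^ k * U k (- t).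

Lemma refl_derivs a b U : derivs_on a b U -> derivs_on (- b) (- a) (refl U).
Proof.
  intros dU k t ht. unfold refl.
  assert (h : derivable_pt_lim (mirr_fct (U k)) t (- U (S k) (- t))).
  { apply derivable_pt_lim_mirr_fwd. rewrite Ropp_involutive. apply dU. lra. }
  replace ((-1) ^ S k * U (S k) (- t)) with ((-1) ^ k * (- U (S k) (- t))) by (simpl; ring).
  apply (derivable_pt_lim_scal (mirr_fct (U k)) ((-1)^k) t). exact h.
Qed.

Lemma sgn_sq k : (-1) ^ k * (-1) ^ k = 1.
Proof. rewrite <- pow_add. replace (k + k)%nat with (2 * k)%nat by lia. apply pow_1_even. Qed.

Lemma refl_cm U V k t : cm (refl U) (refl V) k t = cm U V k (- t).
Proof.
  unfold refl, cmod. f_equal. pose proof (sgn_sq k).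
  transitivity (((-1)^k * (-1)^k) * (U k (-t) * U k (-t) + V k (-t) * V k (-t))); [ring|].
  rewrite H. ring.
Qed.

Lemma exists_min (P : nat -> Prop) : (exists k, P k) -> exists k, P k /\ forall j, (j < k)%nat -> ~ P j.
Proof.
  intros [k hk]. revert hk. induction k as [k IH] using (well_founded_induction lt_wf).
  intros hk. destruct (classic (exists j, (j < k)%nat /\ P j)) as [[j [hj pj]]|hno].
  - exact (IH j hj pj).
  - exists k. split; auto. intros j hj pj. apply hno. eauto.
Qed.

Theorem lemma8 (a b : R) (n : nat) (C : R) (U V : nat -> R -> R) :
  a < 0 < b -> (2 <= n)%nat -> 0 <= C ->
  derivs_on a b U -> derivs_on a b V ->
  (forall x, a < x < b -> x <> 0 ->
     cmod (U n x) (V n x) <=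
     C * sum_f_R0 (fun k => cmod (U k x) (V k x) / Rabs x ^ (n - k)) (n - 1)) ->
  (exists x, a < x < b /\ (U 0%nat x <> 0 \/ V 0%nat x <> 0)) ->
  exists N : nat,
    (forall j, (j < N)%nat -> U j 0 = 0 /\ V j 0 = 0) /\
    (U N 0 <> 0 \/ V N 0 <> 0) /\
    INR N <= Bn n * C + INR n - 1.
Proof.
  intros hab hn hC dU dV hineq [x [hx hnz]].
  set (r := Bn n * C + INR n - 1).
  assert (hr : 0 < r).
  { unfold r. pose proof (Bn_pos n). assert (2 <= INR n) by (apply (le_INR 2); lia). nra. }
  destruct (archimed r) as [hu1 hu2].
  assert (hz : (0 <= up r)%Z) by (apply le_IZR; lra).
  set (N0 := Z.to_nat (up r)).
  assert (hN0 : INR N0 = IZR (up r)) by (unfold N0; rewrite INR_IZR_INZ, Z2Nat.id; auto).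
  destruct (classic (exists j, (j < N0)%nat /\ (U j 0 <> 0 \/ V j 0 <> 0))) as [hex|hno].
  - destruct (exists_min _ hex) as [j [[hj hj'] hmin]].
    exists j. split; [|split; auto].
    + intros i hi. destruct (Req_dec (U i 0) 0); destruct (Req_dec (V i 0) 0); auto;
        exfalso; apply (hmin i hi); split; auto; lia.
    + assert (INR j + 1 <= INR N0) by (rewrite <- S_INR; apply le_INR; lia). fold r. lra.
  - exfalso.
    assert (hv : forall j, (j < N0)%nat -> U j 0 = 0 /\ V j 0 = 0).
    { intros j hj. destruct (Req_dec (U j 0) 0); destruct (Req_dec (V j 0) 0); auto;
        exfalso; apply hno; eauto. }
    assert (hlt : Bn n * C + INR n - 1 < INR N0) by (rewrite hN0; fold r; lra).
    destruct (Rle_or_lt 0 x) as [hx0|hx0].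
    + destruct (core a b U V n C N0 hab hn hC dU dV hineq hlt hv x ltac:(lra)).
      destruct hnz; auto.
    + assert (h := core (- b) (- a) (refl U) (refl V) n C N0 ltac:(lra) hn hC
                (refl_derivs a b U dU) (refl_derivs a b V dV)).
      destruct (h) with (x := - x) as [h1 h2]; try lra.
      * intros t ht ht0. rewrite refl_cm.
        replace (sum_f_R0 (fun k => cm (refl U) (refl V) k t / Rabs t ^ (n - k)) (n - 1))
          with (sum_f_R0 (fun k => cm U V k (- t) / Rabs (- t) ^ (n - k)) (n - 1)).
        -- apply hineq; lra.
        -- apply sum_eq. intros i _. rewrite refl_cm, Rabs_Ropp. reflexivity.
      * intros j hj. unfold refl. rewrite Ropp_0. destruct (hv j hj) as [e1 e2].
        rewrite e1, e2. split; ring.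
      * unfold refl in h1, h2. simpl in h1, h2. rewrite Ropp_involutive in h1, h2.
        destruct hnz; lra.
Qed.
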